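(* Let $s\ge 2$ and let $R,r,h$ be positive integers with $R\le r$, and assume $\mathrm{Perf}(s,r,R)\neq\emptyset$. Identify $\mathbb F_q^{s\times(r+h)}$ with $\mathbb F_q^{s\times r}\times\mathbb F_q^{s\times h}$, writing $x=(x',x'')$ (the first $r$ columns and the last $h$ columns). For any function $f:\mathbb F_q^{s\times h}\to\mathrm{Perf}(s,r,R)$, the code $C_f=\{(c',c''): c''\in\mathbb F_q^{s\times h},\ c'\in f(c'')\}$ belongs to $\mathrm{Perf}(s,r+h,R)$. Conversely, every $C\in\mathrm{Perf}(s,r+h,R)$ is of the form $C_f$ for some function $f:\mathbb F_q^{s\times h}\to\mathrm{Perf}(s,r,R)$ (namely $f(c'')=\{c'\in\mathbb F_q^{s\times r}:(c',c'')\in C\}$).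
   Context: $q$ is a prime power, $\mathbb F_q^{s\times n}$ the set of $s\times n$ matrices over $\mathbb F_q$ with rows in $\mathbb F_q^{1\times n}$. For a row $y=(y_1,\dots,y_n)$, the NRT weight is $w(y)=\max\{j: y_j\neq 0\}$ if $y\ne0$ and $w(0)=0$; for a matrix, $w(x)=\sum_i w(x_i)$. The NRT metric is $d(x,y)=w(x-y)$; $B(c,R)=\{x: d(x,c)\le R\}$. A code $C\subseteq\mathbb F_q^{s\times n}$ is $R$-perfect if the balls $B(c,R)$, $c\in C$, are pairwise disjoint and cover $\mathbb F_q^{s\times n}$; non-trivial means $|C|>1$ and $C\ne\mathbb F_q^{s\times n}$. $\mathrm{Perf}(s,n,R)$ denotes the set of non-trivial $R$-perfect codes in $\mathbb F_q^{s\times n}$. *)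

(* Defs.v *)
From mathcomp Require Import all_boot all_order all_algebra.
Set Implicit Arguments. Unset Strict Implicit. Unset Printing Implicit Defensive.
Import GRing.Theory.
Local Open Scope ring_scope.

Definition nrt_row_weight (F : finFieldType) (n : nat) (y : 'rV[F]_n) : nat :=
  \max_(j < n | y 0 j != 0) j.+1.

Definition nrt_weight (F : finFieldType) (s n : nat) (x : 'M[F]_(s, n)) : nat :=
  (\sum_(i < s) nrt_row_weight (row i x))%N.

Definition nrt_dist (F : finFieldType) (s n : nat) (x y : 'M[F]_(s, n)) : nat :=
  nrt_weight (x - y).

Definition nrt_ball (F : finFieldType) (s n : nat) (c : 'M[F]_(s, n)) (R : nat)
  : {set 'M[F]_(s, n)} := [set x | (nrt_dist x c <= R)%N].

Definition perfect_code (F : finFieldType) (s n R : nat) (C : {set 'M[F]_(s, n)}) : Prop :=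
  (forall c1 c2, c1 \in C -> c2 \in C -> c1 != c2 ->
     [disjoint nrt_ball c1 R & nrt_ball c2 R]) /\
  (forall x : 'M[F]_(s, n), exists2 c, c \in C & x \in nrt_ball c R).

Definition in_Perf (F : finFieldType) (s n R : nat) (C : {set 'M[F]_(s, n)}) : Prop :=
  perfect_code R C /\ (1 < #|C|)%N /\ C != [set: 'M[F]_(s, n)].

Definition code_of_fun (F : finFieldType) (s r h : nat)
  (f : 'M[F]_(s, h) -> {set 'M[F]_(s, r)}) : {set 'M[F]_(s, r + h)} :=
  [set x | lsubmx x \in f (rsubmx x)].

Definition fibre_fun (F : finFieldType) (s r h : nat) (C : {set 'M[F]_(s, r + h)})
  (c'' : 'M[F]_(s, h)) : {set 'M[F]_(s, r)} :=
  [set c' | row_mx c' c'' \in C].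

(* Main.v *)
Require Import Defs.
From mathcomp Require Import all_boot all_order all_algebra.
Set Implicit Arguments. Unset Strict Implicit. Unset Printing Implicit Defensive.
Import GRing.Theory.
Local Open Scope ring_scope.

Section S.
Variable F : finFieldType.

Lemma wt_rowmx0 s r h (a : 'M[F]_(s, r)) :
  nrt_weight (row_mx a (0 : 'M[F]_(s, h))) = nrt_weight a.
Proof.
rewrite /nrt_weight; apply: eq_bigr => i _.
rewrite row_row_mx /nrt_row_weight big_split_ord /=.
rewrite [X in maxn _ X]big_pred0 ?maxn0; last by move=> j; rewrite row_mxEr !mxE eqxx.
by apply: eq_bigl => j; rewrite row_mxEl.
Qed.

Lemma wt_rowmx_gt s r h (a : 'M[F]_(s, r)) (b : 'M[F]_(s, h)) :
  b != 0 -> (r < nrt_weight (row_mx a b))%N.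
Proof.
move=> bn0.
have : [exists i, [exists j, b i j != 0]].
  apply: contraR bn0 => /existsPn H; apply/eqP/matrixP => i j; rewrite mxE.
  by move/existsPn: (H i) => /(_ j); rewrite negbK => /eqP.
case/existsP => i /existsP [j Hij].
rewrite /nrt_weight (bigD1 i) //=; apply: leq_trans (leq_addr _ _).
apply: leq_trans (leq_bigmax_cond (F := fun j : 'I_(r + h) => j.+1) _ _); last first.
  instantiate (1 := rshift r j); by rewrite [X in X != _]mxE row_mxEr.
by rewrite /= ltnS leq_addr.
Qed.

Lemma ball_rowmx s r h R (a c : 'M[F]_(s, r)) (b d : 'M[F]_(s, h)) : (R <= r)%N ->
  (row_mx a b \in nrt_ball (row_mx c d) R) = (b == d) && (a \in nrt_ball c R).
Proof.
move=> Rr; rewrite !inE /nrt_dist opp_row_mx add_row_mx.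
case: (eqVneq b d) => [->|bd]; first by rewrite subrr wt_rowmx0.
apply/negbTE; rewrite -ltnNge; apply: leq_ltn_trans Rr (wt_rowmx_gt _ _).
by rewrite subr_eq0.
Qed.

Lemma wt_const s r : (s * r.+1 <= nrt_weight (const_mx (GRing.one F) : 'M[F]_(s, r.+1)))%N.
Proof.
rewrite /nrt_weight -[s in (s * _)%N]card_ord -sum_nat_const.
apply: leq_sum => i _; rewrite /nrt_row_weight.
apply: leq_trans (leq_bigmax_cond (F := fun j : 'I_r.+1 => j.+1) _ _); last first.
  by instantiate (1 := ord_max); rewrite !mxE oner_neq0.
by [].
Qed.

Lemma wt_delta s r (i0 : 'I_s) : (nrt_weight (delta_mx i0 (ord0 : 'I_r.+1) : 'M[F]_(s, r.+1)) <= 1)%N.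
Proof.
rewrite /nrt_weight (bigD1 i0) //= big1 ?addn0.
  apply/bigmax_leqP => j; rewrite !mxE eqxx /=.
  by case: (eqVneq j ord0) => [->//|_]; rewrite /= mulr0n eqxx.
move=> i Hi; apply/eqP; rewrite -leqn0; apply/bigmax_leqP => j.
by rewrite !mxE (negbTE Hi) /= mulr0n eqxx.
Qed.

Lemma perf_nontriv s r R (D : {set 'M[F]_(s, r)}) : (2 <= s)%N -> (0 < R)%N -> (R <= r)%N ->
  perfect_code R D -> (1 < #|D|)%N /\ D != setT.
Proof.
move=> s2 R0 Rr [dis cov].
case: r Rr D dis cov => [|r] Rr D dis cov; first by move: (leq_trans R0 Rr).
have i0 : 'I_s := Ordinal (leq_trans (isT : (0 < 2)%N) s2).
split.
  rewrite ltnNge; apply/negP => D1.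
  have [c cD _] := cov 0.
  have [c' c'D Hb] := cov (const_mx (GRing.one F) + c).
  case: (eqVneq c' c) => [Ec|Ne].
    move: Hb; rewrite Ec inE /nrt_dist addrK => Hw.
    have := wt_const s r; have : (2 * r.+1 <= s * r.+1)%N by rewrite leq_mul2r s2 orbT.
    move=> H1 H2; have := leq_trans H1 (leq_trans H2 Hw).
    by rewrite leqNgt (leq_ltn_trans Rr) // ltn_Pmull.
  by move: D1; rewrite leqNgt => /negP; apply; apply/card_gt1P; exists c', c.
apply/negP => /eqP DT.
set d := - delta_mx i0 (ord0 : 'I_r.+1) : 'M[F]_(s, r.+1).
have dn0 : (0 : 'M[F]_(s, r.+1)) != d.
  apply/eqP => /matrixP /(_ i0 ord0); rewrite !mxE !eqxx /= => /eqP.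
  by rewrite eq_sym oppr_eq0 oner_eq0.
have := dis 0 d; rewrite DT !inE => /(_ isT isT dn0) Hd.
have := disjointFr Hd (x := 0).
rewrite !inE /nrt_dist subrr opprK add0r.
have -> : nrt_weight (0 : 'M[F]_(s, r.+1)) = 0%N.
  by rewrite /nrt_weight big1 // => i _; apply/eqP; rewrite -leqn0; apply/bigmax_leqP => j; rewrite !mxE eqxx.
rewrite leq0n => /(_ isT).
by rewrite (leq_trans (wt_delta r i0)).
Qed.
End S.

Theorem mainTheorem11 (F : finFieldType) (s r h R : nat) :
  (2 <= s)%N -> (0 < R)%N -> (R <= r)%N -> (0 < h)%N ->
  (exists C0 : {set 'M[F]_(s, r)}, in_Perf R C0) ->
  (forall f : 'M[F]_(s, h) -> {set 'M[F]_(s, r)},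
     (forall c'', in_Perf R (f c'')) -> in_Perf R (code_of_fun f)) /\
  (forall C : {set 'M[F]_(s, r + h)}, in_Perf R C ->
     (forall c'', in_Perf R (fibre_fun C c'')) /\ C = code_of_fun (fibre_fun C)).
Proof.
move=> s2 R0 Rr h0 _; split.
  move=> f Hf.
  have PC : perfect_code R (code_of_fun f).
    split.
      move=> c1 c2; rewrite -(hsubmxK c1) -(hsubmxK c2).
      move: (lsubmx c1) (rsubmx c1) (lsubmx c2) (rsubmx c2) => a1 b1 a2 b2.
      rewrite !inE !row_mxKl !row_mxKr => H1 H2 Hne.
      rewrite disjoint_subset; apply/subsetP => x; rewrite -(hsubmxK x).
      rewrite ball_rowmx // => /andP [/eqP E1 B1]; rewrite inE ball_rowmx //; apply/negP => /andP [/eqP E2 B2].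
      subst b1 b2.
      have [[dis _] _] := Hf (rsubmx x).
      have an : a1 != a2 by apply: contraNneq Hne => ->.
      by have := disjointFr (dis _ _ H1 H2 an) B1; rewrite B2.
    move=> x; have [[_ cov] _] := Hf (rsubmx x).
    have [c cf cb] := cov (lsubmx x).
    exists (row_mx c (rsubmx x)); first by rewrite inE row_mxKl row_mxKr.
    by rewrite -{1}(hsubmxK x) ball_rowmx // eqxx.
  split=> //.
  have [[PC0 _] [/card_gt1P [c1 [c2 [H1 H2 Hne]]] NT]] := Hf 0.
  split.
    apply/card_gt1P; exists (row_mx c1 0), (row_mx c2 0).
    rewrite !inE !row_mxKl !row_mxKr H1 H2; split=> //.
    by apply: contra_neq Hne => /eq_row_mx [].  
  apply: contraNneq NT => CT; apply/eqP/setP => a; rewrite inE.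
  have : row_mx a 0 \in code_of_fun f by rewrite CT inE.
  by rewrite inE row_mxKl row_mxKr.
move=> C [[dis cov] _].
have EC : C = code_of_fun (fibre_fun C).
  by apply/setP => x; rewrite !inE hsubmxK.
split=> // c''.
have PF : perfect_code R (fibre_fun C c'').
  split.
    move=> a1 a2; rewrite !inE => H1 H2 Hne.
    have Hne' : row_mx a1 c'' != row_mx a2 c''.
      by apply: contra_neq Hne => /eq_row_mx [].
    have D := dis _ _ H1 H2 Hne'.
    rewrite disjoint_subset; apply/subsetP => x B1; rewrite inE; apply/negP => B2.
    have B1' : row_mx x c'' \in nrt_ball (row_mx a1 c'') R by rewrite ball_rowmx // eqxx.
    have B2' : row_mx x c'' \in nrt_ball (row_mx a2 c'') R by rewrite ball_rowmx // eqxx.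
    by have := disjointFr D B1'; rewrite B2'.
  move=> x; have [c cC cb] := cov (row_mx x c'').
  move: cC cb; rewrite -(hsubmxK c) ball_rowmx // => cC /andP [/eqP E B].
  by exists (lsubmx c) => //; rewrite inE E.
by split=> //; apply: perf_nontriv PF.
Qed.
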